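(* For every integer $d\ge2$ and every $q\ne0$ there exists $\Lambda_0=\Lambda_0(q,d)>0$ with the following property. Let $(X,Y,Z,W)$ be a solution of system (S) on $(-\infty,t_{max})$ satisfying: (i) $Y,W>0$; (ii) $\lim_{t\to-\infty}(X,Y,Z,W)(t)=(0,0,1,0)$; (iii) $\mathcal C>0$; (iv) $\lim_{t\to-\infty}W/Y^2=1$; (v) $\mathcal C\lambda^2\ge\Lambda_0$, where $g$ is normalized with $\lambda=\lim_{t\to-\infty}g(t)>0$. Then $$\frac{W(t)^2}{Y(t)^2}\le\frac{A_2}{A_3(d+2)}\qquad\text{for all }t\in(-\infty,t_{max}).$$
   Context: Put $A_2=d(d+2)$ and $A_3=\tfrac14d(d+2)^2q^2$. System (S) is $$X'=X(dX^2+Z^2-1)+\tfrac{A_2}{d}Y^2-2\tfrac{A_3}{d}W^2,\qquad Y'=Y(dX^2+Z^2-X),$$ $$Z'=Z(dX^2+Z^2-1)+A_3W^2,\qquad W'=W(dX^2+Z^2-2X+Z).$$ $g$ is a positive solution of $g'=gX$, and $\mathcal L=gY$. The first integral is $dX^2+A_2Y^2+Z^2-A_3W^2=1-\mathcal C\mathcal L^2$ with $\mathcal C$ constant. Under (i)–(iii), $\lambda=\lim_{t\to-\infty}g(t)$ exists, and fixing it fixes $g$ and hence $\mathcal C$; the product $\mathcal C\lambda^2$ is independent of this choice. *)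

(* Defs.v *)
From Stdlib Require Import Reals.
Open Scope R_scope.

(* Right endpoint of the maximal interval (-oo, t_max); None encodes t_max = +oo. *)
Definition in_dom (tmax : option R) (t : R) : Prop :=
  match tmax with Some T => t < T | None => True end.

Definition lim_minfty (tmax : option R) (f : R -> R) (l : R) : Prop :=
  forall eps : R, 0 < eps ->
    exists M : R, forall t : R, t < M -> in_dom tmax t -> Rabs (f t - l) < eps.

Definition A2 (d : nat) : R := INR d * (INR d + 2).
Definition A3 (d q : R) : R := / 4 * d * (d + 2) ^ 2 * q ^ 2.

Definition solves_S (d : nat) (q : R) (tmax : option R) (X Y Z W : R -> R) : Prop :=
  forall t, in_dom tmax t ->
    let dd := INR d in
    let a2 := A2 d in
    let a3 := A3 dd q in
    derivable_pt_lim X t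
      (X t * (dd * X t ^ 2 + Z t ^ 2 - 1) + a2 / dd * Y t ^ 2 - 2 * (a3 / dd) * W t ^ 2) /\
    derivable_pt_lim Y t (Y t * (dd * X t ^ 2 + Z t ^ 2 - X t)) /\
    derivable_pt_lim Z t (Z t * (dd * X t ^ 2 + Z t ^ 2 - 1) + a3 * W t ^ 2) /\
    derivable_pt_lim W t (W t * (dd * X t ^ 2 + Z t ^ 2 - 2 * X t + Z t)).

(* Main.v *)
Require Import Defs.
From Stdlib Require Import Reals Lra Psatz Classical FunctionalExtensionality.
Open Scope R_scope.

Lemma D_eq f x a b : derivable_pt_lim f x a -> a = b -> derivable_pt_lim f x b.
Proof. intros H ->; exact H. Qed.

Lemma D_ext f g x a : (forall t, f t = g t) -> derivable_pt_lim f x a -> derivable_pt_lim g x a.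
Proof. intros E H. assert (f = g) by (apply functional_extensionality; auto).
  subst; auto. Qed.

Lemma D_mul f g x a b : derivable_pt_lim f x a -> derivable_pt_lim g x b ->
  derivable_pt_lim (fun t => f t * g t) x (a * g x + f x * b).
Proof. intros; apply (derivable_pt_lim_mult f g); auto. Qed.

Lemma D_add f g x a b : derivable_pt_lim f x a -> derivable_pt_lim g x b ->
  derivable_pt_lim (fun t => f t + g t) x (a + b).
Proof. intros; apply (derivable_pt_lim_plus f g); auto. Qed.

Lemma D_sub f g x a b : derivable_pt_lim f x a -> derivable_pt_lim g x b ->
  derivable_pt_lim (fun t => f t - g t) x (a - b).
Proof. intros; apply (derivable_pt_lim_minus f g); auto. Qed.

Lemma D_cst c x : derivable_pt_lim (fun _ => c) x 0.
Proof. apply (derivable_pt_lim_const c). Qed.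

Lemma D_id x : derivable_pt_lim (fun t => t) x 1.
Proof. apply derivable_pt_lim_id. Qed.

Lemma D_div f g x a b : derivable_pt_lim f x a -> derivable_pt_lim g x b -> g x <> 0 ->
  derivable_pt_lim (fun t => f t / g t) x ((a * g x - b * f x) / (g x)²).
Proof. intros; apply (derivable_pt_lim_div f g); auto. Qed.

Lemma D_exp f x a : derivable_pt_lim f x a ->
  derivable_pt_lim (fun t => exp (f t)) x (exp (f x) * a).
Proof. intros H. apply (derivable_pt_lim_comp f exp); auto. apply derivable_pt_lim_exp. Qed.

Lemma D_cont f x a : derivable_pt_lim f x a -> continuity_pt f x.
Proof. intros H. apply derivable_continuous_pt. exists a. exact H. Qed.

Lemma mono_up f f' a b : a <= b ->
  (forall c, a <= c <= b -> derivable_pt_lim f c (f' c)) ->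
  (forall c, a <= c <= b -> 0 <= f' c) -> f a <= f b.
Proof.
  intros Hab Hd Hs. destruct (Req_dec a b) as [->|Hne]; [lra|].
  destruct (MVT_cor2 f f' a b) as [c [E Hc]]; [lra|auto|].
  assert (0 <= f' c) by (apply Hs; lra). nra.
Qed.

Lemma loc_dec f p l : derivable_pt_lim f p l -> l < 0 ->
  exists del, 0 < del /\ forall h, 0 < h < del -> f p < f (p - h).
Proof.
  intros H Hl. destruct (H (- l / 2)) as [del Hdel]; [lra|].
  exists (pos del). split; [apply cond_pos|]. intros h Hh.
  assert (Hh0 : - h <> 0) by lra.
  assert (Ha : Rabs (- h) < del) by (rewrite Rabs_left; lra).
  specialize (Hdel (- h) Hh0 Ha).
  replace (p + - h) with (p - h) in Hdel by ring.
  apply Rabs_def2 in Hdel. destruct Hdel as [H1 H2].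
  assert (Q : (f (p - h) - f p) / - h < l / 2) by lra.
  set (N := f (p - h) - f p) in *.
  assert (EN : N = (N / - h) * (- h)) by (field; lra).
  assert (0 < N); [|unfold N in *; lra].
  rewrite EN. set (q := N / - h) in *. nra.
Qed.

Lemma barrier f f' s0 t : s0 < t ->
  (forall p, s0 <= p <= t -> derivable_pt_lim f p (f' p)) ->
  f s0 < f t ->
  (forall p, s0 < p <= t -> f t <= f p -> f' p < 0) -> False.
Proof.
  intros Hst Hd Hlt Hb.
  destruct (continuity_ab_maj f s0 t) as [M [HM HMr]]; [lra| intros c Hc; eapply D_cont; apply Hd; auto|].
  assert (Ht : f t <= f M) by (apply HM; lra).
  assert (HMs : s0 < M) by (destruct (Req_dec M s0) as [->|]; [lra|lra]).
  assert (Hneg : f' M < 0) by (apply Hb; lra).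
  destruct (loc_dec f M (f' M) (Hd M ltac:(lra)) Hneg) as [del [Hdel Hh]].
  set (h := Rmin (del/2) ((M - s0)/2)).
  assert (0 < h < del).
  { unfold h; split. apply Rmin_glb_lt; lra. eapply Rle_lt_trans; [apply Rmin_l|lra]. }
  specialize (Hh h H).
  assert (h <= (M - s0)/2) by apply Rmin_r.
  assert (f (M - h) <= f M) by (apply HM; lra). lra.
Qed.

Lemma cont_eps f p : continuity_pt f p -> forall e, 0 < e ->
  exists del, 0 < del /\ forall x, Rabs (x - p) < del -> Rabs (f x - f p) < e.
Proof.
  intros H e He. destruct (H e He) as [del [Hd Hc]]. exists del; split; [lra|].
  intros x Hx. destruct (Req_dec x p) as [->|Hne].
  - unfold Rminus; rewrite Rplus_opp_r, Rabs_R0; lra.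
  - apply (Hc x). split; [split; [exact I|auto]|]. simpl. unfold R_dist. exact Hx.
Qed.

Lemma first_cross f a b : a < b ->
  (forall c, a <= c <= b -> continuity_pt f c) ->
  f a < 0 -> 0 <= f b ->
  exists p, a < p <= b /\ f p = 0 /\ forall s, a <= s < p -> f s < 0.
Proof.
  intros Hab Hc Ha Hb.
  set (E := fun x => a <= x <= b /\ forall s, a <= s <= x -> f s < 0).
  assert (Hbd : bound E) by (exists b; intros x [Hx _]; lra).
  assert (Hne : exists x, E x) by (exists a; split; [lra|intros s Hs; replace s with a by lra; auto]).
  destruct (completeness E Hbd Hne) as [p [Hub Hlub]].
  assert (Hap : a <= p) by (apply Hub; destruct Hne; unfold E; split; [lra|intros s Hs; replace s with a by lra; auto]).
  assert (Hpb : p <= b) by (apply Hlub; intros x [Hx _]; lra).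
  assert (Hbelow : forall s, a <= s < p -> f s < 0).
  { intros s Hs. destruct (Rle_lt_dec s a) as [Hsa|Hsa].
    - replace s with a by lra; auto.
    - destruct (classic (exists x, E x /\ s <= x)) as [[x [[Hx1 Hx2] Hsx]]|Hno].
      + apply Hx2; lra.
      + exfalso. assert (p <= s); [|lra]. apply Hlub. intros x Hx.
        destruct (Rle_lt_dec x s); auto. exfalso; apply Hno; exists x; split; auto; lra. }
  assert (Hcp := Hc p (conj Hap Hpb)).
  assert (Hfp : 0 <= f p).
  { destruct (Rle_lt_dec 0 (f p)) as [|Hlt]; auto. exfalso.
    destruct (cont_eps f p Hcp (- f p / 2)) as [del [Hdel Hcl]]; [lra|].
    assert (Hpb' : p < b) by (destruct (Req_dec p b); [subst; lra|lra]).
    set (x := Rmin (p + del/2) b).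
    assert (E x).
    { split. unfold x; split; [apply Rmin_glb; lra|apply Rmin_r].
      intros s Hs. destruct (Rlt_le_dec s p) as [Hsp|Hsp]; [apply Hbelow; lra|].
      destruct (Req_dec s p) as [->|Hsp']; [lra|].
      assert (x <= p + del/2) by apply Rmin_l.
      assert (Hd : Rabs (f s - f p) < - f p / 2).
      { apply Hcl. rewrite Rabs_right; lra. }
      apply Rabs_def2 in Hd. lra. }
    assert (x <= p) by (apply Hub; auto).
    assert (p < x) by (unfold x; apply Rmin_glb_lt; lra). lra. }
  assert (Hap' : a < p) by (destruct (Req_dec a p) as [<-|]; lra).
  assert (Hfp2 : f p <= 0).
  { destruct (Rle_lt_dec (f p) 0) as [|Hlt]; auto. exfalso.
    destruct (cont_eps f p Hcp (f p / 2)) as [del [Hdel Hcl]]; [lra|].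
    set (s := Rmax (p - del/2) a).
    assert (Hs1 : a <= s) by apply Rmax_r.
    assert (Hs2 : s < p) by (unfold s; apply Rmax_lub_lt; lra).
    assert (p - del/2 <= s) by apply Rmax_l.
    assert (Hd : Rabs (f s - f p) < f p / 2).
    { apply Hcl. rewrite Rabs_left; lra. }
    apply Rabs_def2 in Hd. 
    assert (f s < 0) by (apply Hbelow; lra). lra. }
  exists p. repeat split; auto; lra.
Qed.

Ltac fs := field; repeat split; try (intro; lra).

Lemma D_sq f x a : derivable_pt_lim f x a -> derivable_pt_lim (fun t => f t ^ 2) x (2 * f x * a).
Proof. intros H. eapply D_eq. eapply D_ext; [|apply (D_mul f f x a a H H)].
  intros t; simpl; ring. simpl; ring. Qed.

Lemma D_scal c f x a : derivable_pt_lim f x a -> derivable_pt_lim (fun t => c * f t) x (c * a).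
Proof. intros H. eapply D_eq. apply (D_mul (fun _ => c) f x 0 a (D_cst c x) H). ring. Qed.

Lemma D_opp f x a : derivable_pt_lim f x a -> derivable_pt_lim (fun t => - f t) x (- a).
Proof. intros H. eapply D_eq. apply (D_ext (fun t => -1 * f t)). intros; ring. apply (D_scal (-1) f x a H). ring. Qed.

Lemma exp_mono x y : x <= y -> exp x <= exp y.
Proof. intros [H| ->]; [left; apply exp_increasing; auto|lra]. Qed.

Lemma key (dd a2 a3 C lambda t0 : R) (X Y Z W g : R -> R) :
  2 <= dd -> 0 < a2 -> 0 < a3 -> 0 < C -> 0 < lambda ->
  (forall s, s <= t0 ->
    derivable_pt_lim X s (X s * (dd*X s^2 + Z s^2 - 1) + a2/dd*Y s^2 - 2*(a3/dd)*W s^2) /\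
    derivable_pt_lim Y s (Y s * (dd*X s^2 + Z s^2 - X s)) /\
    derivable_pt_lim Z s (Z s * (dd*X s^2 + Z s^2 - 1) + a3*W s^2) /\
    derivable_pt_lim W s (W s * (dd*X s^2 + Z s^2 - 2*X s + Z s)) /\
    derivable_pt_lim g s (g s * X s) /\ 0 < g s /\ 0 < Y s /\ 0 < W s /\
    dd*X s^2 + a2*Y s^2 + Z s^2 - a3*W s^2 = 1 - C*(g s*Y s)^2) ->
  (forall e, 0 < e -> exists M, forall s, s < M -> s <= t0 -> Rabs (X s) < e) ->
  (forall e, 0 < e -> exists M, forall s, s < M -> s <= t0 -> Rabs (Y s) < e) ->
  (forall e, 0 < e -> exists M, forall s, s < M -> s <= t0 -> Rabs (W s / Y s ^ 2 - 1) < e) ->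
  (forall e, 0 < e -> exists M, forall s, s < M -> s <= t0 -> Rabs (g s - lambda) < e) ->
  a2 + 4 * exp 8 / (a2 / (a3 * (dd + 2))) + 1 <= C * lambda ^ 2 ->
  (forall s, s <= t0 -> (dd+2)*a3*W s^2 - a2*Y s^2 <= 0) ->
  (dd+2)*a3*W t0^2 - a2*Y t0^2 = 0 -> False.
Proof.
  intros Hdd Ha2 Ha3 HC Hlam HD LX LY LR LG HLam HF HF0.
  set (P := fun s => dd*X s^2 + Z s^2).
  assert (HFI : forall s, s <= t0 -> 1 - P s = C*(g s*Y s)^2 + a2*Y s^2 - a3*W s^2).
  { intros s Hs. destruct (HD s Hs) as [_ [_ [_ [_ [_ [_ [_ [_ E]]]]]]]]. unfold P. lra. }
  assert (HW3 : forall s, s <= t0 -> a3 * W s^2 <= a2 * Y s^2 / (dd+2)).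
  { intros s Hs. specialize (HF s Hs). apply Rmult_le_reg_r with (dd+2); [lra|].
    replace (a2*Y s^2/(dd+2)*(dd+2)) with (a2*Y s^2) by fs. lra. }
  assert (HP1 : forall s, s <= t0 -> C*(g s*Y s)^2 <= 1 - P s).
  { intros s Hs. rewrite HFI by auto. specialize (HW3 s Hs).
    assert (a2 * Y s ^2 / (dd+2) <= a2 * Y s^2).
    { apply Rmult_le_reg_r with (dd+2); [lra|].
      replace (a2*Y s^2/(dd+2)*(dd+2)) with (a2*Y s^2) by fs. pose proof (pow2_ge_0 (Y s)). assert (0 <= a2 * Y s^2) by (apply Rmult_le_pos; lra). nra. }
    lra. }
  assert (HP0 : forall s, s <= t0 -> 0 <= P s).
  { intros s _; unfold P. pose proof (pow2_ge_0 (X s)); pose proof (pow2_ge_0 (Z s)). assert (0 <= dd * X s ^2) by (apply Rmult_le_pos; lra). lra. }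
  assert (HPle : forall s, s <= t0 -> P s <= 1).
  { intros s Hs. specialize (HP1 s Hs). assert (0 <= C*(g s*Y s)^2) by (apply Rmult_le_pos; [lra|apply pow2_ge_0]). lra. }
  assert (HZ1 : forall s, s <= t0 -> Z s <= 1).
  { intros s Hs. specialize (HPle s Hs). unfold P in HPle. assert (0 <= dd * X s ^2) by (apply Rmult_le_pos; [lra|apply pow2_ge_0]). nra. }
  assert (HX0 : forall s, s <= t0 -> 0 <= X s).
  { intros s Hs. destruct (Rle_lt_dec 0 (X s)) as [|Hneg]; auto. exfalso.
    destruct (LX (- X s / 2)) as [M HM]; [lra|].
    set (s0 := Rmin M s - 1).
    assert (Hs0 : s0 < s) by (unfold s0; assert (Rmin M s <= s) by apply Rmin_r; lra).
    assert (Hs0M : s0 < M) by (unfold s0; assert (Rmin M s <= M) by apply Rmin_l; lra).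
    specialize (HM s0 Hs0M ltac:(lra)). apply Rabs_def2 in HM.
    apply (barrier (fun t => - X t) (fun t => - (X t * (dd*X t^2 + Z t^2 - 1) + a2/dd*Y t^2 - 2*(a3/dd)*W t^2)) s0 s Hs0).
    - intros p Hp. destruct (HD p ltac:(lra)) as [H _].
      apply D_opp; exact H.
    - lra.
    - intros p Hp Hle. assert (Hp0 : p <= t0) by lra.
      destruct (HD p Hp0) as [_ [_ [_ [_ [_ [_ [HYp [HWp _]]]]]]]].
      specialize (HW3 p Hp0). specialize (HPle p Hp0). unfold P in HPle.
      assert (Hxa : X p * (dd * X p ^ 2 + Z p ^ 2 - 1) >= 0) by nra.
      assert (Hb : 0 < a2/dd*Y p^2 - 2*(a3/dd)*W p^2).
      { assert (E : a2/dd*Y p^2 - 2*(a3/dd)*W p^2 = (a2*Y p^2 - 2*(a3*W p^2))/dd) by fs.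
        rewrite E. apply Rdiv_lt_0_compat; [|lra].
        assert (a2 * Y p ^2 / (dd+2) <= a2 * Y p^2 / 4).
        { unfold Rdiv. apply Rmult_le_compat_l. apply Rmult_le_pos; [lra|apply pow2_ge_0]. apply Rinv_le_contravar; lra. }
        assert (0 < a2 * Y p^2) by (apply Rmult_lt_0_compat; [lra| apply pow_lt; lra]). lra. }
      lra. }
  assert (Hgm : forall s t, s <= t -> t <= t0 -> g s <= g t).
  { intros s t Hst Ht. apply (mono_up g (fun u => g u * X u)); auto.
    - intros c Hc. destruct (HD c ltac:(lra)) as [_ [_ [_ [_ [H _]]]]]. exact H.
    - intros c Hc. destruct (HD c ltac:(lra)) as [_ [_ [_ [_ [_ [H _]]]]]].
      specialize (HX0 c ltac:(lra)). nra. }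
  assert (Hgl : forall s, s <= t0 -> lambda <= g s).
  { intros s Hs. destruct (Rle_lt_dec lambda (g s)) as [|Hlt]; auto. exfalso.
    destruct (LG (lambda - g s)) as [M HM]; [lra|].
    set (s1 := Rmin M s - 1).
    assert (Hs1 : s1 < s) by (unfold s1; assert (Rmin M s <= s) by apply Rmin_r; lra).
    assert (Hs1M : s1 < M) by (unfold s1; assert (Rmin M s <= M) by apply Rmin_l; lra).
    specialize (HM s1 Hs1M ltac:(lra)). apply Rabs_def2 in HM.
    specialize (Hgm s1 s ltac:(lra) Hs). lra. }
  set (L2 := fun s => C*(g s*Y s)^2).
  assert (HYL : forall s, s <= t0 -> C*lambda^2 * Y s^2 <= L2 s).
  { intros s Hs. unfold L2. specialize (Hgl s Hs).
    assert (lambda^2 <= g s^2) by (apply pow_incr; lra).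
    replace (C*(g s*Y s)^2) with (C * g s^2 * Y s^2) by ring.
    apply Rmult_le_compat_r; [apply pow2_ge_0|]. apply Rmult_le_compat_l; lra. }
  assert (HA2Y : forall s, s <= t0 -> a2 * Y s^2 <= L2 s).
  { intros s Hs. specialize (HYL s Hs). pose proof (pow2_ge_0 (Y s)).
    assert (a2 <= C*lambda^2).
    { assert (0 <= 4 * exp 8 / (a2 / (a3 * (dd + 2)))).
      { apply Rle_mult_inv_pos. pose proof (exp_pos 8); lra.
        apply Rdiv_lt_0_compat; [lra|]. apply Rmult_lt_0_compat; lra. }
      lra. }
    nra. }
  assert (HdL : forall s, s <= t0 -> derivable_pt_lim L2 s (2 * L2 s * P s)).
  { intros s Hs. destruct (HD s Hs) as [_ [HY [_ [_ [Hg _]]]]].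
    eapply D_eq. apply D_scal. apply D_sq. apply (D_mul g Y s _ _ Hg HY).
    unfold L2, P. ring. }
  assert (HLm : forall s t, s <= t -> t <= t0 -> L2 s <= L2 t).
  { intros s t Hst Ht. apply (mono_up L2 (fun u => 2 * L2 u * P u)); auto.
    - intros c Hc. apply HdL; lra.
    - intros c Hc. specialize (HP0 c ltac:(lra)). assert (0 <= L2 c).
      { unfold L2. apply Rmult_le_pos; [lra|apply pow2_ge_0]. }
      nra. }
  set (F := fun s => (dd+2)*a3*W s^2 - a2*Y s^2).
  assert (HdF : forall s, s <= t0 -> derivable_pt_lim F s
     (2 * (P s - X s) * F s + 2*(dd+2)*a3*W s^2 * (Z s - X s))).
  { intros s Hs. destruct (HD s Hs) as [_ [HY [_ [HW _]]]].
    eapply D_eq. apply D_sub; apply D_scal; apply D_sq; [exact HW|exact HY].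
    unfold F, P. ring. }
  assert (HV0 : X t0 <= Z t0).
  { destruct (Rle_lt_dec (X t0) (Z t0)) as [|Hlt]; auto. exfalso.
    assert (Hneg : 2 * (P t0 - X t0) * F t0 + 2*(dd+2)*a3*W t0^2 * (Z t0 - X t0) < 0).
    { replace (F t0) with 0 by (unfold F; lra).
      destruct (HD t0 ltac:(lra)) as [_ [_ [_ [_ [_ [_ [_ [HWp _]]]]]]]].
      assert (0 < W t0 ^2) by (apply pow_lt; lra).
      assert (0 < 2*(dd+2)*a3*W t0^2) by (apply Rmult_lt_0_compat; [|lra]; apply Rmult_lt_0_compat; lra).
      nra. }
    destruct (loc_dec F t0 _ (HdF t0 ltac:(lra)) Hneg) as [del [Hdel Hh]].
    specialize (Hh (del/2) ltac:(lra)). specialize (HF (t0 - del/2) ltac:(lra)).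
    unfold F in Hh. lra. }
  assert (HdV : forall s, s <= t0 -> derivable_pt_lim (fun u => Z u - X u) s
      ((Z s - X s) * (P s - 1) + F s / dd)).
  { intros s Hs. destruct (HD s Hs) as [HX [_ [HZ _]]].
    eapply D_eq. apply D_sub; [exact HZ|exact HX]. unfold F, P. fs. }
  assert (HVp : forall s, s <= t0 -> X s <= Z s).
  { intros s Hs. destruct (Rle_lt_dec (X s) (Z s)) as [|Hlt]; auto. exfalso.
    assert (Hst : s < t0) by (destruct (Req_dec s t0) as [->|]; lra).
    destruct (first_cross (fun u => Z u - X u) s t0 Hst) as [p [Hp [Hp0 Hbel]]].
    - intros c Hc. eapply D_cont. apply HdV; lra.
    - lra.
    - lra.
    - assert (Hm : (fun u => - (Z u - X u) * exp u) s <= (fun u => - (Z u - X u) * exp u) p).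
      { apply (mono_up (fun u => - (Z u - X u) * exp u) (fun u => exp u * (-(Z u - X u) * P u - F u / dd))); [lra| |].
        + intros c Hc. eapply D_eq. apply D_mul. apply D_opp. apply HdV; lra.
          apply derivable_pt_lim_exp. cbv beta. field. lra.
        + intros c Hc. assert (Hc0 : c <= t0) by lra.
          assert (HVc : Z c - X c <= 0).
          { destruct (Req_dec c p) as [->|Hne]; [lra|]. assert (Z c - X c < 0) by (apply Hbel; lra). lra. }
          specialize (HP0 c Hc0). specialize (HF c Hc0). fold (F c) in HF.
          pose proof (exp_pos c).
          assert (0 <= -(Z c - X c) * P c) by nra.
          assert (0 <= - F c / dd) by (unfold Rdiv; apply Rmult_le_pos; [lra|left; apply Rinv_0_lt_compat; lra]).
          apply Rmult_le_pos; lra. }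
      simpl in Hm. rewrite Hp0 in Hm. pose proof (exp_pos s). nra. }
  assert (HL0 : forall s, s <= t0 -> 0 <= L2 s).
  { intros s _. unfold L2. apply Rmult_le_pos; [lra|apply pow2_ge_0]. }
  assert (Hdr : forall s, s <= t0 -> derivable_pt_lim (fun u => W u / Y u ^ 2) s
      (W s / Y s ^ 2 * (Z s - P s))).
  { intros s Hs. destruct (HD s Hs) as [_ [HY [_ [HW [_ [_ [HYp _]]]]]]].
    eapply D_eq. apply D_div. exact HW. apply D_sq. exact HY.
    apply pow_nonzero; lra. unfold P. unfold Rsqr. fs. }
  assert (Hearly : forall t1, t1 <= t0 -> (forall s, s <= t1 -> L2 s <= 1/4) ->
      W t1 / Y t1 ^ 2 * (1 - 3 * L2 t1) <= 1).
  { intros t1 Ht1 HLs.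
    set (Psi := fun u => W u / Y u ^ 2 * (1 - 3 * L2 u)).
    assert (Hmono : forall s, s <= t1 -> Psi t1 <= Psi s).
    { intros s Hs.
      assert (- Psi s <= - Psi t1); [|lra].
      apply (mono_up (fun u => - Psi u)
        (fun u => - (W u / Y u ^ 2 * (Z u - P u) * (1 - 3 * L2 u) + W u / Y u ^ 2 * (0 - 3 * (2 * L2 u * P u))))); auto.
      - intros c Hc. apply D_opp. unfold Psi.
        apply (D_mul (fun u => W u / Y u ^ 2) (fun u => 1 - 3 * L2 u)). apply Hdr; lra.
        apply (D_sub (fun _ => 1) (fun u => 3 * L2 u)). apply D_cst. apply D_scal. apply HdL; lra.
      - intros c Hc. assert (Hc0 : c <= t0) by lra.
        destruct (HD c Hc0) as [_ [_ [_ [_ [_ [_ [HYp [HWp _]]]]]]]].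
        assert (Hr : 0 < W c / Y c ^ 2) by (apply Rdiv_lt_0_compat; [lra|apply pow_lt; lra]).
        set (r := W c / Y c ^ 2) in *.
        specialize (HLs c ltac:(lra)). specialize (HL0 c Hc0).
        specialize (HFI c Hc0). specialize (HA2Y c Hc0). specialize (HZ1 c Hc0).
        fold (L2 c) in HFI.
        assert (0 <= a3 * W c ^2) by (apply Rmult_le_pos; [lra|apply pow2_ge_0]).
        assert (H1 : Z c - P c <= 2 * L2 c) by lra.
        assert (H2 : (Z c - P c) * (1 - 3 * L2 c) <= 2 * L2 c * (1 - 3 * L2 c))
          by (apply Rmult_le_compat_r; lra).
        assert (H3 : 1/2 <= P c) by lra.
        assert (H4 : (Z c - P c) * (1 - 3 * L2 c) - 6 * L2 c * P c <= 0) by nra.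
        assert (E : - (r * (Z c - P c) * (1 - 3 * L2 c) + r * (0 - 3 * (2 * L2 c * P c)))
           = - r * ((Z c - P c) * (1 - 3 * L2 c) - 6 * L2 c * P c)) by ring.
        rewrite E. nra. }
    destruct (Rle_lt_dec (Psi t1) 1) as [|Hlt]; auto. exfalso.
    destruct (LR (Psi t1 - 1)) as [M HM]; [lra|].
    set (s1 := Rmin M t1 - 1).
    assert (Hs1 : s1 < t1) by (unfold s1; assert (Rmin M t1 <= t1) by apply Rmin_r; lra).
    assert (Hs1M : s1 < M) by (unfold s1; assert (Rmin M t1 <= M) by apply Rmin_l; lra).
    specialize (HM s1 Hs1M ltac:(lra)). apply Rabs_def2 in HM.
    specialize (Hmono s1 ltac:(lra)).
    destruct (HD s1 ltac:(lra)) as [_ [_ [_ [_ [_ [_ [HYp [HWp _]]]]]]]].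
    assert (Hr : 0 < W s1 / Y s1 ^ 2) by (apply Rdiv_lt_0_compat; [lra|apply pow_lt; lra]).
    specialize (HL0 s1 ltac:(lra)).
    assert (Psi s1 <= W s1 / Y s1 ^ 2) by (unfold Psi; nra).
    lra. }
  assert (Hdu : forall s, s <= t0 -> derivable_pt_lim (fun u => W u / Y u) s
      (W s / Y s * (Z s - X s))).
  { intros s Hs. destruct (HD s Hs) as [_ [HY [_ [HW [_ [_ [HYp _]]]]]]].
    eapply D_eq. apply D_div. exact HW. exact HY. lra. unfold Rsqr. fs. }
  assert (Hlate : forall t1, t1 < t0 -> (forall s, t1 <= s <= t0 -> 1/4 <= L2 s) ->
      W t0 / Y t0 * exp (4*(Z t0 - X t0)) <= W t1 / Y t1 * exp (4*(Z t1 - X t1))).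
  { intros t1 Ht1 HLs.
    assert (Hm : - (W t1 / Y t1 * exp (4*(Z t1 - X t1))) <= - (W t0 / Y t0 * exp (4*(Z t0 - X t0)))); [|lra].
    apply (mono_up (fun u => - (W u / Y u * exp (4*(Z u - X u))))
      (fun u => - (W u / Y u * (Z u - X u) * exp (4*(Z u - X u)) +
                   W u / Y u * (exp (4*(Z u - X u)) * (4 * ((Z u - X u) * (P u - 1) + F u / dd)))))); [lra| |].
    - intros c Hc. apply D_opp.
      apply (D_mul (fun u => W u / Y u) (fun u => exp (4*(Z u - X u)))). apply Hdu; lra.
      apply (D_exp (fun u => 4*(Z u - X u))). apply D_scal. apply HdV; lra.
    - intros c Hc. assert (Hc0 : c <= t0) by lra.
      destruct (HD c Hc0) as [_ [_ [_ [_ [_ [_ [HYp [HWp _]]]]]]]].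
      assert (Hu : 0 < W c / Y c) by (apply Rdiv_lt_0_compat; lra).
      pose proof (exp_pos (4*(Z c - X c))).
      set (u := W c / Y c) in *. set (e := exp (4*(Z c - X c))) in *.
      specialize (HLs c Hc). specialize (HP1 c Hc0). fold (L2 c) in HP1.
      specialize (HVp c Hc0). specialize (HF c Hc0). fold (F c) in HF.
      assert (H1 : (Z c - X c) * (1 + 4 * (P c - 1)) <= 0) by nra.
      assert (H2 : F c / dd <= 0) by (unfold Rdiv; assert (0 < / dd) by (apply Rinv_0_lt_compat; lra); nra).
      assert (E : - (u * (Z c - X c) * e + u * (e * (4 * ((Z c - X c) * (P c - 1) + F c / dd))))
         = - (u * e) * ((Z c - X c) * (1 + 4 * (P c - 1)) + 4 * (F c / dd))) by ring.
      rewrite E. assert (0 < u * e) by (apply Rmult_lt_0_compat; lra). nra. }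
  assert (Hexp4 : 1 <= exp 4) by (rewrite <- exp_0; apply exp_mono; lra).
  assert (Hmain : exists t1, t1 <= t0 /\ (forall s, s <= t1 -> L2 s <= 1/4) /\
                   W t0 / Y t0 <= exp 4 * (W t1 / Y t1)).
  { destruct (HD t0 ltac:(lra)) as [_ [_ [_ [_ [_ [_ [HYp [HWp _]]]]]]]].
    assert (Hu0 : 0 < W t0 / Y t0) by (apply Rdiv_lt_0_compat; lra).
    destruct (Rle_lt_dec (L2 t0) (1/4)) as [HA|HB].
    - exists t0. split; [lra|split].
      + intros s Hs. specialize (HLm s t0 Hs ltac:(lra)). lra.
      + nra.
    -
      set (del := Rmin 1 (1 / (4 * C * (lambda + 1)^2 + 1))).
      assert (Hdel0 : 0 < del).
      { unfold del. apply Rmin_glb_lt; [lra|]. apply Rdiv_lt_0_compat; [lra|].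
        assert (0 < 4 * C * (lambda + 1)^2) by (apply Rmult_lt_0_compat; [lra|apply pow_lt; lra]). lra. }
      assert (Hdel1 : del <= 1) by apply Rmin_l.
      assert (Hdel2 : del <= 1 / (4 * C * (lambda + 1)^2 + 1)) by apply Rmin_r.
      destruct (LY del Hdel0) as [M1 HM1]. destruct (LG 1 ltac:(lra)) as [M2 HM2].
      set (s0 := Rmin (Rmin M1 M2) t0 - 1).
      assert (Hs0a : s0 < t0) by (unfold s0; assert (Rmin (Rmin M1 M2) t0 <= t0) by apply Rmin_r; lra).
      assert (Hs0b : s0 < M1 /\ s0 < M2).
      { unfold s0. assert (Rmin (Rmin M1 M2) t0 <= Rmin M1 M2) by apply Rmin_l.
        assert (Rmin M1 M2 <= M1) by apply Rmin_l. assert (Rmin M1 M2 <= M2) by apply Rmin_r. lra. }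
      specialize (HM1 s0 ltac:(lra) ltac:(lra)). specialize (HM2 s0 ltac:(lra) ltac:(lra)).
      apply Rabs_def2 in HM1. apply Rabs_def2 in HM2.
      destruct (HD s0 ltac:(lra)) as [_ [_ [_ [_ [_ [Hgp [HYs _]]]]]]].
      assert (HL2s : L2 s0 < 1/4).
      { unfold L2.
        assert (Hy2 : Y s0 ^ 2 < del) by nra.
        assert (Hg2 : g s0 ^ 2 <= (lambda+1)^2) by nra.
        replace (4 * C * (lambda + 1)^2) with (4 * (C * (lambda + 1)^2)) in Hdel2 by ring.
        set (A := C * (lambda + 1)^2) in *.
        assert (HA0 : 0 < A) by (unfold A; apply Rmult_lt_0_compat; [lra|apply pow_lt; lra]).
        assert (Hd3 : del * (4 * A + 1) <= 1).
        { assert (Hq : 1 / (4*A+1) * (4*A+1) = 1) by fs.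
          assert (del*(4*A+1) <= 1/(4*A+1)*(4*A+1)) by (apply Rmult_le_compat_r; lra). lra. }
        assert (E : C * (g s0 * Y s0) ^ 2 = C * g s0 ^ 2 * Y s0 ^ 2) by ring. rewrite E.
        assert (C * g s0 ^ 2 <= A) by (unfold A; apply Rmult_le_compat_l; lra).
        pose proof (pow2_ge_0 (Y s0)). assert (0 <= C * g s0 ^ 2) by (apply Rmult_le_pos; [lra|apply pow2_ge_0]).
        nra. }
      destruct (first_cross (fun u => L2 u - 1/4) s0 t0 Hs0a) as [p [Hp [Hp0 Hbel]]].
      + intros c Hc. eapply D_cont. apply (D_sub L2 (fun _ => 1/4)). apply HdL; lra. apply D_cst.
      + lra.
      + lra.
      + exists p. split; [lra|split].
        * intros s Hs. specialize (HLm s p Hs ltac:(lra)). lra.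
        * destruct (Req_dec p t0) as [->|Hne]; [nra|].
          assert (Hl := Hlate p ltac:(lra) ltac:(intros s Hs; specialize (HLm p s ltac:(lra) ltac:(lra)); lra)).
          destruct (HD p ltac:(lra)) as [_ [_ [_ [_ [_ [_ [HYq [HWq _]]]]]]]].
          assert (Hu1 : 0 < W p / Y p) by (apply Rdiv_lt_0_compat; lra).
          assert (He0 : 1 <= exp (4 * (Z t0 - X t0))).
          { rewrite <- exp_0. apply exp_mono. specialize (HVp t0 ltac:(lra)). lra. }
          assert (He1 : exp (4 * (Z p - X p)) <= exp 4).
          { apply exp_mono. specialize (HZ1 p ltac:(lra)). specialize (HX0 p ltac:(lra)). lra. }
          assert (W t0 / Y t0 <= W t0 / Y t0 * exp (4 * (Z t0 - X t0))) by nra.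
          assert (W p / Y p * exp (4 * (Z p - X p)) <= W p / Y p * exp 4) by (apply Rmult_le_compat_l; lra).
          lra. }
  destruct Hmain as [t1 [Ht1 [Hle Hu]]].
  assert (He := Hearly t1 Ht1 Hle).
  destruct (HD t1 Ht1) as [_ [_ [_ [_ [_ [_ [HY1 [HW1 _]]]]]]]].
  destruct (HD t0 ltac:(lra)) as [_ [_ [_ [_ [_ [_ [HY0 [HW0 _]]]]]]]].
  assert (HL1 : L2 t1 <= 1/4) by (apply Hle; lra).
  set (r1 := W t1 / Y t1 ^ 2) in *.
  assert (Hr1p : 0 < r1) by (apply Rdiv_lt_0_compat; [lra|apply pow_lt; lra]).
  assert (Hr1 : r1 <= 4).
  { specialize (HL0 t1 Ht1). assert (r1 * (1/4) <= r1 * (1 - 3 * L2 t1)) by (apply Rmult_le_compat_l; lra). lra. }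
  assert (Hu1 : W t1 / Y t1 = r1 * Y t1) by (unfold r1; fs).
  assert (HY1b : C * lambda ^ 2 * Y t1 ^ 2 <= 1/4) by (specialize (HYL t1 Ht1); lra).
  set (K := a2 / (a3 * (dd + 2))) in *.
  assert (HK : 0 < K) by (unfold K; apply Rdiv_lt_0_compat; [lra|apply Rmult_lt_0_compat; lra]).
  assert (Hu0 : (W t0 / Y t0)^2 = K).
  { unfold K. assert (E : (dd+2)*a3*W t0^2 = a2 * Y t0^2) by lra.
    apply Rmult_eq_reg_r with (a3 * (dd+2) * Y t0 ^ 2).
    2: { assert (0 < Y t0 ^ 2) by (apply pow_lt; lra). assert (0 < a3 * (dd+2)) by (apply Rmult_lt_0_compat; lra). nra. }
    replace ((W t0 / Y t0) ^ 2 * (a3 * (dd + 2) * Y t0 ^ 2)) with ((dd+2)*a3*W t0^2) by fs.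
    rewrite E. fs. }
  assert (Hu0p : 0 < W t0 / Y t0) by (apply Rdiv_lt_0_compat; lra).
  assert (Hsq : (W t0 / Y t0)^2 <= (exp 4 * (r1 * Y t1))^2) by (rewrite <- Hu1; apply pow_incr; lra).
  assert (E8 : exp 8 = exp 4 * exp 4) by (rewrite <- exp_plus; f_equal; lra).
  assert (Hk : K <= exp 8 * 16 * Y t1 ^ 2).
  { rewrite Hu0 in Hsq. rewrite E8.
    assert (r1^2 <= 16) by nra.
    assert (0 <= Y t1 ^2) by apply pow2_ge_0.
    assert (0 < exp 4) by apply exp_pos.
    replace ((exp 4 * (r1 * Y t1)) ^ 2) with (exp 4 * exp 4 * r1^2 * Y t1^2) in Hsq by ring.
    assert (exp 4 * exp 4 * r1^2 * Y t1^2 <= exp 4 * exp 4 * 16 * Y t1^2).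
    { apply Rmult_le_compat_r; auto. apply Rmult_le_compat_l; [|lra]. nra. }
    lra. }
  assert (HCl : 0 < C * lambda^2) by (apply Rmult_lt_0_compat; [lra|apply pow_lt; lra]).
  assert (HKC : K * (C * lambda^2) <= 4 * exp 8).
  { assert (K * (C*lambda^2) <= exp 8 * 16 * Y t1 ^ 2 * (C*lambda^2)) by (apply Rmult_le_compat_r; lra).
    pose proof (exp_pos 8). nra. }
  assert (HKC2 : 4 * exp 8 / K * K = 4 * exp 8) by fs.
  assert (K * (a2 + 4 * exp 8 / K + 1) <= K * (C * lambda ^ 2)) by (apply Rmult_le_compat_l; lra).
  assert (0 < K * (a2 + 1)) by (apply Rmult_lt_0_compat; lra).
  nra.
Qed.

Lemma dom_le tmax s t : in_dom tmax t -> s <= t -> in_dom tmax s.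
Proof. destruct tmax; simpl; lra. Qed.

Theorem theorem5p3 :
  forall (d : nat) (q : R), (2 <= d)%nat -> q <> 0 ->
  exists Lambda0 : R, 0 < Lambda0 /\
  forall (tmax : option R) (X Y Z W g : R -> R) (C lambda : R),
    solves_S d q tmax X Y Z W ->
    (* g is a positive solution of g' = g X *)
    (forall t, in_dom tmax t -> 0 < g t /\ derivable_pt_lim g t (g t * X t)) ->
    (* first integral, with L = g Y *)
    (forall t, in_dom tmax t ->
       INR d * X t ^ 2 + A2 d * Y t ^ 2 + Z t ^ 2 - A3 (INR d) q * W t ^ 2
       = 1 - C * (g t * Y t) ^ 2) ->
    (* (i) *)
    (forall t, in_dom tmax t -> 0 < Y t /\ 0 < W t) ->
    (* (ii) *)
    lim_minfty tmax X 0 -> lim_minfty tmax Y 0 ->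
    lim_minfty tmax Z 1 -> lim_minfty tmax W 0 ->
    (* (iii) *)
    0 < C ->
    (* (iv) *)
    lim_minfty tmax (fun t => W t / Y t ^ 2) 1 ->
    (* normalization of g *)
    lim_minfty tmax g lambda -> 0 < lambda ->
    (* (v) *)
    Lambda0 <= C * lambda ^ 2 ->
    forall t, in_dom tmax t ->
      W t ^ 2 / Y t ^ 2 <= A2 d / (A3 (INR d) q * (INR d + 2)).
Proof.
  intros d q Hd Hq.
  assert (Hdd : 2 <= INR d) by (replace 2 with (INR 2) by (simpl; ring); apply le_INR; lia).
  assert (Ha2 : 0 < A2 d) by (unfold A2; apply Rmult_lt_0_compat; lra).
  assert (Ha3 : 0 < A3 (INR d) q).
  { unfold A3. assert (0 < q^2) by (assert (0 < q * q) by (destruct (Rlt_or_le 0 q); [nra|destruct H; nra]); simpl; lra).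
    assert (0 < (INR d + 2)^2) by (apply pow_lt; lra).
    assert (0 < / 4 * INR d) by (apply Rmult_lt_0_compat; lra).
    apply Rmult_lt_0_compat; [apply Rmult_lt_0_compat|]; lra. }
  set (dd := INR d) in *. set (a2 := A2 d) in *. set (a3 := A3 dd q) in *.
  assert (HK : 0 < a2 / (a3 * (dd + 2))) by (apply Rdiv_lt_0_compat; [lra|apply Rmult_lt_0_compat; lra]).
  exists (a2 + 4 * exp 8 / (a2 / (a3 * (dd + 2))) + 1). split.
  { assert (0 <= 4 * exp 8 / (a2 / (a3 * (dd + 2)))) by (apply Rle_mult_inv_pos; [pose proof (exp_pos 8); lra|lra]). lra. }
  intros tmax X Y Z W g C lambda HS Hg HFI HYW LX LY LZ LW HC LR LG Hlam HL t Ht.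
  set (F := fun s => (dd+2)*a3*W s^2 - a2*Y s^2).
  assert (Hgoal : F t <= 0 -> W t ^ 2 / Y t ^ 2 <= a2 / (a3 * (dd + 2))).
  { intros HF. unfold F in HF. destruct (HYW t Ht) as [HY HW].
    assert (0 < Y t ^2) by (apply pow_lt; lra).
    apply (Rmult_le_reg_r (Y t ^2 * (a3 * (dd+2)))). apply Rmult_lt_0_compat; [lra|apply Rmult_lt_0_compat; lra].
    replace (W t ^ 2 / Y t ^ 2 * (Y t ^ 2 * (a3 * (dd + 2)))) with ((dd+2)*a3*W t^2) by fs.
    replace (a2 / (a3 * (dd + 2)) * (Y t ^ 2 * (a3 * (dd + 2)))) with (a2 * Y t^2) by fs.
    lra. }
  apply Hgoal. destruct (Rle_lt_dec (F t) 0) as [|HFt]; auto. exfalso.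
  assert (HDs : forall s, in_dom tmax s ->
    derivable_pt_lim X s (X s * (dd*X s^2 + Z s^2 - 1) + a2/dd*Y s^2 - 2*(a3/dd)*W s^2) /\
    derivable_pt_lim Y s (Y s * (dd*X s^2 + Z s^2 - X s)) /\
    derivable_pt_lim Z s (Z s * (dd*X s^2 + Z s^2 - 1) + a3*W s^2) /\
    derivable_pt_lim W s (W s * (dd*X s^2 + Z s^2 - 2*X s + Z s)) /\
    derivable_pt_lim g s (g s * X s) /\ 0 < g s /\ 0 < Y s /\ 0 < W s /\
    dd*X s^2 + a2*Y s^2 + Z s^2 - a3*W s^2 = 1 - C*(g s*Y s)^2).
  { intros s Hs. pose proof (HS s Hs) as H. cbv zeta in H. destruct H as [H1 [H2 [H3 H4]]].
    destruct (Hg s Hs). destruct (HYW s Hs). repeat split; auto. }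
  assert (HdF : forall s, in_dom tmax s -> continuity_pt F s).
  { intros s Hs. destruct (HDs s Hs) as [_ [HY [_ [HW _]]]].
    eapply D_cont. apply D_sub; apply D_scal; apply D_sq; [exact HW|exact HY]. }
  set (B := 4 * ((dd+2)*a3)).
  assert (HB : 0 < B) by (unfold B; apply Rmult_lt_0_compat; [lra|apply Rmult_lt_0_compat; lra]).
  set (del := Rmin 1 (a2 / (B + 1))).
  assert (Hdel0 : 0 < del) by (unfold del; apply Rmin_glb_lt; [lra|apply Rdiv_lt_0_compat; lra]).
  assert (Hdel1 : del <= 1) by apply Rmin_l.
  assert (Hdel2 : del * (B + 1) <= a2).
  { assert (del <= a2/(B+1)) by apply Rmin_r.
    assert (Hq1 : a2 / (B+1) * (B+1) = a2) by fs.
    assert (del * (B+1) <= a2/(B+1) * (B+1)) by (apply Rmult_le_compat_r; lra). lra. }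
  destruct (LR 1 ltac:(lra)) as [M1 HM1]. destruct (LY del Hdel0) as [M2 HM2].
  assert (Hearly : forall s, s < Rmin M1 M2 -> in_dom tmax s -> F s < 0).
  { intros s Hs Hds. assert (Rmin M1 M2 <= M1) by apply Rmin_l. assert (Rmin M1 M2 <= M2) by apply Rmin_r.
    specialize (HM1 s ltac:(lra) Hds). specialize (HM2 s ltac:(lra) Hds).
    apply Rabs_def2 in HM1. apply Rabs_def2 in HM2.
    destruct (HYW s Hds) as [HY HW].
    assert (HY2 : 0 < Y s ^ 2) by (apply pow_lt; lra).
    assert (Hr : W s = (W s / Y s ^ 2) * Y s ^ 2) by fs.
    set (r := W s / Y s ^ 2) in *.
    unfold F. rewrite Hr.
    assert (Hy : Y s ^ 2 < del) by nra.
    assert (r^2 < 4) by nra.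
    replace ((dd + 2) * a3 * (r * Y s ^ 2) ^ 2 - a2 * Y s ^ 2) with
      (Y s ^ 2 * ((dd + 2) * a3 * r^2 * Y s ^ 2 - a2)) by ring.
    assert (Hc : 0 < (dd+2)*a3) by (apply Rmult_lt_0_compat; lra).
    assert (G1 : (dd + 2) * a3 * r^2 * Y s ^ 2 <= (dd+2)*a3*4 * Y s ^ 2).
    { apply Rmult_le_compat_r; [lra|]. apply Rmult_le_compat_l; lra. }
    assert (G2 : (dd+2)*a3*4 * Y s ^ 2 < B * del) by (unfold B; nra).
    assert (G3 : (dd + 2) * a3 * r^2 * Y s ^ 2 - a2 < 0) by lra.
    nra. }
  set (s0 := Rmin (Rmin M1 M2) t - 1).
  assert (Hs0t : s0 < t) by (unfold s0; assert (Rmin (Rmin M1 M2) t <= t) by apply Rmin_r; lra).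
  assert (Hs0M : s0 < Rmin M1 M2) by (unfold s0; assert (Rmin (Rmin M1 M2) t <= Rmin M1 M2) by apply Rmin_l; lra).
  destruct (first_cross F s0 t Hs0t) as [p [Hp [Hp0 Hbel]]].
  - intros c Hc. apply HdF. apply (dom_le tmax c t); auto; lra.
  - apply Hearly; auto. apply (dom_le tmax s0 t); auto; lra.
  - lra.
  - assert (Hdp : forall s, s <= p -> in_dom tmax s) by (intros s Hs; apply (dom_le tmax s t); auto; lra).
    apply (key dd a2 a3 C lambda p X Y Z W g); auto.
    + intros e He. destruct (LX e He) as [M HM]. exists M. intros s Hs Hsp.
      specialize (HM s Hs (Hdp s Hsp)). rewrite Rminus_0_r in HM. exact HM.
    + intros e He. destruct (LY e He) as [M HM]. exists M. intros s Hs Hsp.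
      specialize (HM s Hs (Hdp s Hsp)). rewrite Rminus_0_r in HM. exact HM.
    + intros e He. destruct (LR e He) as [M HM]. exists M. intros s Hs Hsp.
      exact (HM s Hs (Hdp s Hsp)).
    + intros e He. destruct (LG e He) as [M HM]. exists M. intros s Hs Hsp.
      exact (HM s Hs (Hdp s Hsp)).
    + intros s Hs. fold (F s). destruct (Rle_lt_dec s0 s) as [Hs0|Hs0].
      * destruct (Req_dec s p) as [->|Hne]; [lra|]. left; apply Hbel; lra.
      * left. apply Hearly; [lra|auto].
Qed.
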